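(* Let $\Gamma$ be a Coxeter graph of spherical type or of affine type, and let $\mathcal X\subset\Phi[\Gamma]$ be free of infinity with respect to $\hat M$, i.e. $\hat m_{\beta,\gamma}\neq\infty$ for all $\beta,\gamma\in\mathcal X$. Then $\mathcal X$ is finite, the full subgraph $\hat\Gamma_{\mathcal X}$ of $\hat\Gamma$ spanned by $\mathcal X$ is of spherical type or of affine type, and $n_{\mathrm{sph}}(A[\hat\Gamma_{\mathcal X}])\le n_{\mathrm{sph}}(A[\Gamma])$.
   Context: A Coxeter matrix on a countable set $S$ is a symmetric matrix $M=(m_{s,t})_{s,t\in S}$ with entries in $\mathbb{N}\cup\{\infty\}$ with $m_{s,s}=1$ and $m_{s,t}=m_{t,s}\ge2$ for $s\ne t$; it is encoded by a Coxeter graph $\Gamma$ with vertex set $S$. $W[\Gamma]=\langle S\mid s^2=1,\ (st)^{m_{s,t}}=1 \text{ for } m_{s,t}\ne\infty\rangle$ is the Coxeter group and $A[\Gamma]$ the Artin group. Let $V$ be the real vector space with basis $\{\alpha_s\mid s\in S\}$ and canonical symmetric bilinear form $\langle\alpha_s,\alpha_t\rangle=-2\cos(\pi/m_{s,t})$ if $m_{s,t}\neq\infty$ and $-2$ otherwise; $W[\Gamma]$ acts on $V$ by $s(v)=v-\langle v,\alpha_s\rangle\alpha_s$, and $\Phi[\Gamma]=\{w(\alpha_s)\mid w\in W[\Gamma],s\in S\}$ is the root system. Define the Coxeter matrix $\hat M=(\hat m_{\beta,\gamma})_{\beta,\gamma\in\Phi[\Gamma]}$ by $\hat m_{\beta,\beta}=1$,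 and for $\beta\neq\gamma$: $\hat m_{\beta,\gamma}=m_{s,t}$ if there exist $w\in W[\Gamma]$, $s,t\in S$ with $\beta=w(\alpha_s)$, $\gamma=w(\alpha_t)$, $m_{s,t}\neq\infty$ (independent of choices), and $\hat m_{\beta,\gamma}=\infty$ otherwise; $\hat\Gamma$ is its Coxeter graph. A finite Coxeter graph is of spherical type if its Coxeter group is finite (equivalently its canonical bilinear form is positive definite), and of affine type if its canonical bilinear form is positive semi-definite but not positive definite. For a Coxeter graph $\Gamma$ with vertex set $S$ and $X\subset S$, $\Gamma_X$ is the full subgraph spanned by $X$; the spherical dimension $n_{\mathrm{sph}}(A[\Gamma])$ is the maximum of $|X|$ over all finite $X\subset S$ with $\Gamma_X$ of spherical type. *)

(* Defs.v *)
From HB Require Import structures.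
From mathcomp Require Import all_boot all_order all_algebra.
From mathcomp Require Import boolp classical_sets cardinality reals trigo.
Set Implicit Arguments. Unset Strict Implicit. Unset Printing Implicit Defensive.
Import Order.TTheory GRing.Theory Num.Theory.
Local Open Scope ring_scope.

(* A Coxeter matrix on the finite set 'I_n; None encodes the entry infinity. *)
Definition coxmat (n : nat) := 'I_n -> 'I_n -> option nat.

Definition is_coxeter_matrix (n : nat) (m : coxmat n) : Prop :=
  (forall s, m s s = Some 1%N) /\
  (forall s t, m s t = m t s) /\
  (forall s t k, s != t -> m s t = Some k -> (2 <= k)%N).

Section Cox.
Variable R : realType.

(* Gram matrix of the canonical bilinear form: <a_s,a_t> = -2 cos(pi/m_st), or -2 if m_st = oo. *)
Definition gram (n : nat) (m : coxmat n) : 'M[R]_n :=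
  \matrix_(i, j) match m i j with
                 | Some k => - 2 * cos (pi / k%:R)
                 | None => - 2
                 end.

Definition bil (n : nat) (m : coxmat n) (u v : 'rV[R]_n) : R :=
  (u *m gram m *m v^T) 0 0.

Definition alpha (n : nat) (s : 'I_n) : 'rV[R]_n := delta_mx 0 s.

Definition refl (n : nat) (m : coxmat n) (s : 'I_n) (v : 'rV[R]_n) : 'rV[R]_n :=
  v - bil m v (alpha s) *: alpha s.

(* action of the element of W represented by the word w = s1 s2 ... sk *)
Definition act (n : nat) (m : coxmat n) (w : seq 'I_n) (v : 'rV[R]_n) : 'rV[R]_n :=
  foldr (refl m) v w.

Definition rootsys (n : nat) (m : coxmat n) : set 'rV[R]_n :=
  [set b | exists (w : seq 'I_n) (s : 'I_n), b = act m w (alpha s)].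

Definition hat_witness (n : nat) (m : coxmat n) (b c : 'rV[R]_n) (p : nat) : Prop :=
  exists (w : seq 'I_n) (s t : 'I_n),
    b = act m w (alpha s) /\ c = act m w (alpha t) /\ m s t = Some p.

(* the Coxeter matrix hat M on Phi[Gamma] (value independent of choices, per the paper) *)
Definition hatm (n : nat) (m : coxmat n) (b c : 'rV[R]_n) : option nat :=
  if b == c then Some 1%N else
  match pselect (exists p, hat_witness m b c p) with
  | left H => Some (projT1 (cid H))
  | right _ => None
  end.

(* the full subgraph hat Gamma_X, for X enumerated (without repetition) by the list l *)
Definition hat_sub (n : nat) (m : coxmat n) (l : seq 'rV[R]_n) : coxmat (size l) :=
  fun i j => hatm m (nth 0 l i) (nth 0 l j).

(* full subgraph Gamma_Y is of spherical type: form positive definite on span{alpha_s, s in Y} *)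
Definition spherical_on (n : nat) (m : coxmat n) (Y : {set 'I_n}) : Prop :=
  forall v : 'rV[R]_n, v != 0 -> (forall i, i \notin Y -> v 0 i = 0) -> 0 < bil m v v.

Definition spherical (n : nat) (m : coxmat n) : Prop :=
  forall v : 'rV[R]_n, v != 0 -> 0 < bil m v v.

Definition affine (n : nat) (m : coxmat n) : Prop :=
  (forall v : 'rV[R]_n, 0 <= bil m v v) /\ ~ spherical m.

End Cox.

Definition nsph (R : realType) (n : nat) (m : coxmat n) : nat :=
  \max_(Y : {set 'I_n} | `[< spherical_on R m Y >]) #|Y|.

(* Main.v *)
Require Import Defs.
From HB Require Import structures.
From mathcomp Require Import all_boot all_order all_algebra.
From mathcomp Require Import boolp classical_sets cardinality reals trigo.
From mathcomp Require Import ring lra zify.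
Import Order.TTheory GRing.Theory Num.Theory.
Local Open Scope ring_scope.

Section Basics.
Variable R : realType.
Variable n : nat.
Variable m : coxmat n.
Hypothesis Hm : is_coxeter_matrix m.

Local Notation G := (gram R m).
Local Notation bil := (@bil R n m).

Lemma bilE u v : bil u v = \sum_i \sum_j u 0 i * G i j * v 0 j.
Proof.
rewrite /bil !mxE exchange_big /=; apply eq_bigr => j _.
rewrite !mxE mulr_suml; apply eq_bigr => i _; by rewrite !mxE.
Qed.

Lemma bilDl u1 u2 v : bil (u1 + u2) v = bil u1 v + bil u2 v.
Proof. by rewrite /bil !mulmxDl mxE. Qed.
Lemma bilZl a u v : bil (a *: u) v = a * bil u v.
Proof. by rewrite /bil -!scalemxAl mxE. Qed.
Lemma bilDr u v1 v2 : bil u (v1 + v2) = bil u v1 + bil u v2.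
Proof. by rewrite /bil linearD /= mulmxDr mxE. Qed.
Lemma bilZr a u v : bil u (a *: v) = a * bil u v.
Proof. by rewrite /bil linearZ /= -scalemxAr mxE. Qed.
Lemma bilNl u v : bil (- u) v = - bil u v.
Proof. by rewrite -scaleN1r bilZl mulN1r. Qed.
Lemma bilNr u v : bil u (- v) = - bil u v.
Proof. by rewrite -scaleN1r bilZr mulN1r. Qed.

Lemma gram_sym : G^T = G.
Proof.
case: Hm => _ [Hs _]; apply/matrixP => i j; by rewrite !mxE Hs.
Qed.

Lemma bilC u v : bil u v = bil v u.
Proof.
have h (A : 'M[R]_1) : A 0 0 = A^T 0 0 by rewrite mxE.
by rewrite /bil h !trmx_mul trmxK gram_sym mulmxA.
Qed.

Lemma bil_alpha s t : bil (alpha R s) (alpha R t) = G s t.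
Proof.
rewrite /bil /alpha trmx_delta -rowE -colE !mxE //.
Qed.

Lemma bil_aa s : bil (alpha R s) (alpha R s) = 2.
Proof.
case: Hm => H1 _; rewrite bil_alpha mxE H1 divr1 cospi; lra.
Qed.

Lemma refl_iso s u v : bil (@refl R n m s u) (@refl R n m s v) = bil u v.
Proof.
rewrite /refl !(bilDl, bilDr, bilNl, bilNr, bilZl, bilZr) bil_aa.
rewrite (bilC (alpha R s) v); lra.
Qed.

Lemma act_iso w u v : bil (@act R n m w u) (@act R n m w v) = bil u v.
Proof. elim: w => [//|s w IH] /=; by rewrite refl_iso. Qed.


Lemma psd_orth (Hpsd : forall v, 0 <= bil v v) y z : bil z z = 0 -> bil y z = 0.
Proof.
move=> hz.
set a := bil y y; set b := bil y z.
have ha : 0 <= a by apply: Hpsd.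
have key t : 0 <= t * t * a + 2 * t * b.
  have := Hpsd (z + t *: y).
  rewrite !(bilDl, bilDr, bilZl, bilZr) hz (bilC z y) -/a -/b.
  move=> h; lra.
set t := - b / (a + 1).
have ht : t * (a + 1) = - b.
  rewrite /t mulrAC -mulrA divff ?mulr1 //; apply/lt0r_neq0; lra.
have := key t.
nra.
Qed.

Lemma hat_wit b c : b != c -> @hatm R n m b c <> None ->
  exists p, @hat_witness R n m b c p /\ @hatm R n m b c = Some p.
Proof.
rewrite /hatm => /negbTE ->.
case: pselect => [H _|] //.
case: (cid H) => p Hp /=; by exists p.
Qed.

Lemma hat_entry b c : @rootsys R n m b -> @hatm R n m b c <> None ->
  (match @hatm R n m b c with Some k => - 2 * cos (pi / k%:R) | None => - 2 end) = bil b c.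
Proof.
move=> [w [s ->]] hN.
case: (eqVneq (@act R n m w (alpha R s)) c) => [<-|bc].
  rewrite /hatm eqxx act_iso bil_alpha mxE.
  by case: Hm => ->.
have [p [[w' [s' [t' [-> [-> hst]]]]] ->]] := hat_wit _ _ bc hN.
by rewrite act_iso bil_alpha mxE hst.
Qed.

Lemma obtuse b c : b != c -> @hatm R n m b c <> None -> bil b c <= 0.
Proof.
move=> bc hN.
have [p [[w [s [t [eb [ec hst]]]]] _]] := hat_wit _ _ bc hN.
have st : s != t.
  apply/eqP => est; move: bc; by rewrite eb ec est eqxx.
case: Hm => _ [_ H2]; have p2 := H2 _ _ _ st hst.
rewrite eb ec act_iso bil_alpha mxE hst.
have hpos : (0 : R) < p%:R by rewrite ltr0n; lia.
have : (0:R) <= cos (pi / (p%:R : R)).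
  apply: cos_ge0_pihalf; apply/andP; split.
    have : 0 <= pi / (p%:R : R) by apply: divr_ge0; [exact: pi_ge0| exact: ltW].
    have := pi_ge0 R; lra.
  rewrite ler_pM2l ?pi_gt0 // lef_pV2 ?posrE //.
  by rewrite (ler_nat R 2 p).
lra.
Qed.


Lemma bil0r u : bil u 0 = 0.
Proof. by rewrite -(scale0r 0) bilZr mul0r. Qed.
Lemma bil0l u : bil 0 u = 0.
Proof. by rewrite -(scale0r 0) bilZl mul0r. Qed.

Lemma bil_sumr (N : nat) u (F : 'I_N -> 'rV[R]_n) :
  bil u (\sum_i F i) = \sum_i bil u (F i).
Proof. exact: (big_morph _ (bilDr u) (bil0r u)). Qed.
Lemma bil_suml (N : nat) u (F : 'I_N -> 'rV[R]_n) :
  bil (\sum_i F i) u = \sum_i bil (F i) u.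
Proof. exact: (big_morph (bil^~ u) (fun x y => bilDl x y u) (bil0l u)). Qed.

Definition rowsmx (s : seq 'rV[R]_n) : 'M[R]_(size s, n) :=
  \matrix_(i, j) (nth 0 s i) 0 j.

Lemma row_rowsmx s i : row i (rowsmx s) = nth 0 s i.
Proof. by apply/rowP => j; rewrite !mxE. Qed.

Lemma mul_rowsmx s (c : 'rV[R]_(size s)) :
  c *m rowsmx s = \sum_i c 0 i *: nth 0 s i.
Proof.
rewrite mulmx_sum_row; apply eq_bigr => i _; by rewrite row_rowsmx.
Qed.

Lemma bil_comb s (a b : 'rV[R]_(size s)) :
  bil (a *m rowsmx s) (b *m rowsmx s) =
  \sum_i \sum_j a 0 i * b 0 j * bil (nth 0 s i) (nth 0 s j).
Proof.
rewrite !mul_rowsmx bil_suml; apply eq_bigr => i _.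
rewrite bilZl bil_sumr mulr_sumr; apply eq_bigr => j _.
by rewrite bilZr; ring.
Qed.

Lemma bil_combr s u (b : 'rV[R]_(size s)) :
  bil u (b *m rowsmx s) = \sum_i b 0 i * bil u (nth 0 s i).
Proof.
rewrite mul_rowsmx bil_sumr; apply eq_bigr => i _; by rewrite bilZr.
Qed.

Lemma free_of_inj (N M : nat) (S : 'M[R]_(N, M)) :
  (forall c : 'rV_N, c *m S = 0 -> c = 0) -> row_free S.
Proof.
move=> inj; rewrite -kermx_eq0; apply/eqP/row_matrixP => i; rewrite row0.
apply inj; by rewrite -row_mul mulmx_ker row0.
Qed.

Lemma obtuse_free (Hpsd : forall v, 0 <= bil v v) (s : seq 'rV[R]_n) u :
  uniq s -> (forall a b, a \in s -> b \in s -> a != b -> bil a b <= 0) ->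
  (forall a, a \in s -> 0 < bil u a) -> (size s <= n)%N.
Proof.
move=> us hob hpos.
suff : row_free (rowsmx s) by move/eqnP => <-; exact: rank_leq_col.
apply: free_of_inj => c hc.
pose cp : 'rV[R]_(size s) := \row_i (if 0 <= c 0 i then c 0 i else 0).
pose cn : 'rV[R]_(size s) := \row_i (if 0 <= c 0 i then 0 else - c 0 i).
have ecp : c = cp - cn.
  apply/rowP => i; rewrite !mxE; case: ifP => _; lra.
have ez : cn *m rowsmx s = cp *m rowsmx s.
  by apply/eqP; rewrite eq_sym -subr_eq0 -mulmxBl -ecp hc.
set z := cp *m rowsmx s.
have hzz : bil z z <= 0.
  rewrite {2}/z -ez bil_comb; apply: sumr_le0 => i _; apply: sumr_le0 => j _.
  rewrite !mxE.
  case: (eqVneq i j) => [->|ij].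
    case: ifP => _; rewrite ?mul0r ?mulr0 ?mul0r //.
  have hb : bil (nth 0 s i) (nth 0 s j) <= 0.
    apply: hob; rewrite ?mem_nth //.
    by rewrite nth_uniq.
  have h1 : 0 <= (if 0 <= c 0 i then c 0 i else 0) by case: ifP => //; lra.
  have h2 : 0 <= (if 0 <= c 0 j then 0 else - c 0 j) by case: ifP => //; lra.
  rewrite -mulrA mulr_ge0_le0 //; nra.
have hz0 : bil z z = 0 by apply/le_anti; rewrite hzz Hpsd.
have huz := psd_orth Hpsd u z hz0.
have key (d : 'rV[R]_(size s)) : (forall i, 0 <= d 0 i) ->
    bil u (d *m rowsmx s) = 0 -> d = 0.
  move=> dge h; rewrite bil_combr in h.
  have := psumr_eq0P _ h.
  have tge : forall i : 'I_(size s), true -> 0 <= d 0 i * bil u (nth 0 s i).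
    move=> i _; apply: mulr_ge0 => //; apply: ltW; apply: hpos; exact: mem_nth.
  move=> /(_ tge) hi; apply/rowP => i; rewrite mxE.
  have := hi i isT; move/eqP; rewrite mulf_eq0 => /orP[/eqP //|].
  by rewrite gt_eqF // hpos // mem_nth.
rewrite ecp.
have -> : cp = 0.
  apply: key => [i|//]; rewrite mxE; case: ifP => //; lra.
have -> : cn = 0.
  apply: key => [i|]; last by rewrite ez.
  rewrite mxE; case: ifP => // /negbT; rewrite -ltNge; lra.
by rewrite subr0.
Qed.


Lemma small_t (T : eqType) (s : seq T) (A B : T -> R) :
  (forall x, x \in s -> A x != 0) ->
  exists2 d, 0 < d & forall t, 0 < t -> t <= d -> forall x, x \in s -> A x + t * B x != 0.
Proof.
elim: s => [|x s IH] h.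
  by exists 1 => //.
have [d' d'0 hd'] := IH (fun y hy => h y ltac:(by rewrite in_cons hy orbT)).
have hAx : A x != 0 by apply: h; rewrite in_cons eqxx.
have hAx0 : 0 < `|A x| by rewrite normr_gt0.
have hB1 : 0 < `|B x| + 1 by have := normr_ge0 (B x); lra.
set e := `|A x| / (`|B x| + 1).
have e0 : 0 < e by apply: divr_gt0.
exists (Num.min d' e); first by rewrite lt_min d'0 e0.
move=> t t0; rewrite le_min => /andP[td' te] y; rewrite in_cons => /orP[/eqP ->|hy].
  apply/eqP => h0.
  have hA : `|A x| = t * `|B x|.
    have -> : A x = - (t * B x) by apply/eqP; rewrite -addr_eq0; apply/eqP.
    by rewrite normrN normrM gtr0_norm.
  move: te; rewrite /e ler_pdivlMr // => te.
  have := normr_ge0 (B x); nra.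
exact: hd'.
Qed.

Lemma generic (s : seq 'rV[R]_n) : (forall v, v \in s -> bil v v != 0) ->
  exists u, forall v, v \in s -> bil u v != 0.
Proof.
elim: s => [|v s IH] h.
  by exists 0.
have [u hu] := IH (fun x hx => h x ltac:(by rewrite in_cons hx orbT)).
case: (eqVneq (bil u v) 0) => huv; last first.
  exists u => x; rewrite in_cons => /orP[/eqP->|]; auto.
have [d d0 hd] := small_t _ s (bil u) (bil v) hu.
exists (u + d *: v) => x; rewrite in_cons => /orP[/eqP->|hx].
  rewrite bilDl bilZl huv add0r mulf_neq0 //; first exact: lt0r_neq0.
  by apply: h; rewrite in_cons eqxx.
rewrite bilDl bilZl; exact: hd.
Qed.

Lemma obtuse_bound (Hpsd : forall v, 0 <= bil v v) (s : seq 'rV[R]_n) :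
  uniq s -> (forall a b, a \in s -> b \in s -> a != b -> bil a b <= 0) ->
  (forall a, a \in s -> bil a a = 2) -> (size s <= n + n)%N.
Proof.
move=> us hob h2.
have [u hu] := generic s (fun v hv => ltac:(by rewrite h2 // pnatr_eq0)).
pose P := fun a => 0 < bil u a.
rewrite -(count_predC P s) -!size_filter.
apply: leq_add.
  apply: (obtuse_free Hpsd _ u); first exact: filter_uniq.
    move=> a b; rewrite !mem_filter => /andP[_ ha] /andP[_ hb]; exact: hob.
  by move=> a; rewrite mem_filter => /andP[].
apply: (obtuse_free Hpsd _ (- u)); first exact: filter_uniq.
  move=> a b; rewrite !mem_filter => /andP[_ ha] /andP[_ hb]; exact: hob.
move=> a; rewrite mem_filter /= /P => /andP[hn ha].
rewrite bilNl oppr_gt0; have hne := hu a ha.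
move: hn; rewrite /= /P -leNgt => hle.
by rewrite lt_neqAle hne hle.
Qed.


Lemma gram_entry (N1 N2 : nat) (A : 'M[R]_(N1, n)) (B : 'M[R]_(N2, n)) i j :
  (A *m G *m B^T) i j = bil (row i A) (row j B).
Proof.
rewrite /bil !mxE; apply eq_bigr => k _; rewrite !mxE; congr (_ * _).
apply eq_bigr => k' _; by rewrite !mxE.
Qed.

Lemma bil_alphar v j : bil v (alpha R j) = (v *m G) 0 j.
Proof. by rewrite /bil /alpha trmx_delta -colE mxE. Qed.

Lemma psd_rank (Hpsd : forall v, 0 <= bil v v) :
  exists Y : {set 'I_n}, spherical_on R m Y /\ #|Y| = \rank G.
Proof.
set f := maxrankfun G.
exists [set f i | i in 'I_(\rank G)]; split; last first.
  by rewrite card_imset ?cardsT ?card_ord //; exact: maxrankfun_inj.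
move=> v v0 hv.
have := Hpsd v; rewrite le_eqVlt => /orP[/eqP h|//].
exfalso; move/negP: v0; apply.
have vG : v *m G = 0.
  apply/rowP => j; rewrite [RHS]mxE -bil_alphar bilC.
  by apply: (psd_orth Hpsd); rewrite -h.
pose x : 'rV[R]_(\rank G) := \row_i v 0 (f i).
have ev : v = x *m rowsub f 1%:M.
  apply/rowP => j; rewrite !mxE.
  case: (boolP (j \in [set f i | i in 'I_(\rank G)])) => hj.
    case/imsetP: hj => i0 _ ->.
    rewrite (bigD1 i0) //= !mxE eqxx mulr1 big1 ?addr0 //.
    move=> i ii0; rewrite !mxE (inj_eq (@maxrankfun_inj _ _ _ G)) (negbTE ii0).
    by rewrite mulr0.
  rewrite hv // big1 // => i _; rewrite !mxE.
  have -> : (f i == j) = false.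
    apply/negbTE; apply/eqP => fij; move: hj; rewrite -fij.
    by rewrite imset_f.
  by rewrite mulr0.
have x0 : x = 0.
  apply: (row_free_inj (maxrowsub_free G)).
  by rewrite mul0mx rowsubE mulmxA -ev vG.
by rewrite ev x0 mul0mx.
Qed.

Lemma hat_rank (N : nat) (mh : coxmat N) (L : 'M[R]_(N, n))
  (hG : gram R mh = L *m G *m L^T) (Y : {set 'I_N}) :
  spherical_on R mh Y -> (#|Y| <= \rank G)%N.
Proof.
move=> hY.
pose D : 'M[R]_(#|Y|, N) := \matrix_(i, j) ((enum_val i == j)%:R).
pose M := D *m L.
pose H := M *m G *m M^T.
have fH : row_free H.
  apply: free_of_inj => x hx.
  case: (eqVneq x 0) => // x0; exfalso.
  pose c := x *m D.
  have csup : forall j, j \notin Y -> c 0 j = 0.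
    move=> j hj; rewrite !mxE big1 // => i _; rewrite !mxE.
    have -> : (enum_val i == j) = false.
      apply/negbTE; apply/eqP => e; move: hj; by rewrite -e enum_valP.
    by rewrite mulr0.
  have c0 : c != 0.
    have [i hi] : exists i, x 0 i != 0.
      case: (pselect (exists i, x 0 i != 0)) => // hn.
      move/negP: x0; case; apply/eqP/rowP => i; rewrite [RHS]mxE.
      apply/eqP; apply: contra_notT hn => h; by exists i.
    apply/eqP => /rowP /(_ (enum_val i)); rewrite !mxE.
    rewrite (bigD1 i) //= !mxE eqxx mulr1 big1 ?addr0.
      by move/eqP: hi.
    move=> i' hi'; rewrite !mxE (inj_eq enum_val_inj) (negbTE hi') mulr0 //.
  have := hY c c0 csup.
  rewrite /Defs.bil hG.
  have -> : c *m (L *m G *m L^T) *m c^T = x *m H *m x^T.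
    by rewrite /H /M /c !trmx_mul !mulmxA.
  by rewrite hx mul0mx mxE lt_def eqxx.
move/eqnP: fH => <-.
apply: leq_trans (mxrankM_maxl _ _) _.
exact: mxrankM_maxr.
Qed.

End Basics.

Local Open Scope classical_set_scope.

Theorem theorem4p1 (R : realType) (n : nat) (m : coxmat n)
  (Hm : is_coxeter_matrix m)
  (Htype : spherical R m \/ affine R m)
  (X : set 'rV[R]_n)
  (HX : X `<=` @rootsys R n m)
  (Hfree : forall b c, X b -> X c -> @hatm R n m b c <> None) :
  finite_set X /\
  (forall l : seq 'rV[R]_n, uniq l -> (forall x, X x <-> x \in l) ->
     (spherical R (@hat_sub R n m l) \/ affine R (@hat_sub R n m l)) /\
     (nsph R (@hat_sub R n m l) <= nsph R m)%N).
Proof.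
have Hpsd : forall v, 0 <= bil (R:=R) m v v.
  move=> v; case: Htype => [hs|[ha _]]; last exact: ha.
  case: (eqVneq v 0) => [->|v0]; first by rewrite bil0l.
  exact: ltW (hs v v0).
have hnorm : forall a, X a -> bil (R:=R) m a a = 2.
  move=> a /HX [w [s ->]]; rewrite act_iso //; exact: bil_aa.
split.
  case: (pselect (finite_set X)) => // hinf.
  have [B hB hsz] := infinite_set_fset (n + n).+1 hinf.
  have hX : forall a, a \in finmap.enum_fset B -> X a by move=> a ha; exact: hB.
  have hsz2 : (size (finmap.enum_fset B) <= n + n)%N.
    apply: (@obtuse_bound R n m Hm Hpsd _ (finmap.fset_uniq B)).
  - move=> a b ha hb ab; apply: (@obtuse R n m Hm _ _ ab); apply: Hfree; exact: hX.
  - move=> a ha; apply: hnorm; exact: hX.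
  by move: hsz; rewrite ltnNge hsz2.
move=> l ul hl.
pose L := rowsmx R n l.
have hG : gram R (@hat_sub R n m l) = L *m gram R m *m L^T.
  apply/matrixP => i j; rewrite gram_entry !row_rowsmx mxE /hat_sub.
  have hi : X (nth 0 l i) by apply/hl; exact: mem_nth.
  have hj : X (nth 0 l j) by apply/hl; exact: mem_nth.
  apply: hat_entry => //; [exact: HX | exact: Hfree].
have Hpsdh : forall c, 0 <= bil (R:=R) (@hat_sub R n m l) c c.
  move=> c; have -> : bil (R:=R) (@hat_sub R n m l) c c = bil (R:=R) m (c *m L) (c *m L).
    by rewrite /Defs.bil hG !trmx_mul !mulmxA.
  exact: Hpsd.
split.
  case: (pselect (spherical R (@hat_sub R n m l))) => h; [by left | by right].
have [Yp [hYp cYp]] := @psd_rank R n m Hm Hpsd.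
apply/bigmax_leqP => Y /asboolP hY.
apply: leq_trans (@hat_rank R n m _ _ _ hG Y hY) _.
rewrite -cYp.
rewrite /nsph.
apply: (leq_bigmax_cond (F := fun Y : {set 'I_n} => #|Y|)).
by apply/asboolP.
Qed.
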